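(* Let $W,V$ be subspaces of $\mathbb{R}^n$ with $\mathbb{R}^n=W\oplus V^\perp$, and let $\mu$ and $\nu$ be probabilistic frames for $W$ and $V$, respectively. (1) If $\nu$ is an oblique $\epsilon$-approximately dual probabilistic frame of $\mu$ on $V$, then $\mu$ and $\nu$ perform probabilistic $\sqrt B\,\epsilon$-consistent reconstruction, where $B>0$ is an upper frame bound for $\nu$. (2) Conversely, if $\mu$ and $\nu$ perform probabilistic $\alpha$-consistent reconstruction, then $\nu$ is an oblique $\epsilon$-approximately dual probabilistic frame of $\mu$ on $V$, where $\epsilon=\alpha\sqrt{M_2\big((\boldsymbol{\pi}_{WV^\perp}\mathbf{S}_\nu^\dagger)_\#\nu\big)}$.
   Context: $\mathcal{P}_2(S)$ denotes Borel probability measures on $\mathbb{R}^n$ concentrated on the subspace $S$ with finite second moment $M_2(\eta)=\int\|\mathbf{x}\|^2d\eta(\mathbf{x})$. $\mu\in\mathcal{P}_2(W)$ is a probabilistic frame for $W$ with bounds $0<A\le B$ if $A\|\mathbf{x}\|^2\le\int_W|\langle\mathbf{x},\mathbf{y}\rangle|^2d\mu(\mathbf{y})\le B\|\mathbf{x}\|^2$ for all $\mathbf{x}\in W$. The frame operator of $\nu$ is $\mathbf{S}_\nu=\int\mathbf{y}\mathbf{y}^td\nu(\mathbf{y})$ with Moore–Penrose inverse $\mathbf{S}_\nu^\dagger$. $\Gamma(\mu,\nu)$ is the set of Borel probability measures on $W\times V$ with marginals $\mu,\nu$. $\boldsymbol{\pi}_{WV^\perp}$ is the oblique projection onto $W$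 along $V^\perp$. For $\epsilon\ge0$, $\nu$ is an oblique $\epsilon$-approximately dual probabilistic frame of $\mu$ on $V$ if there is $\gamma\in\Gamma(\mu,\nu)$ with $\left\|\int_{W\times V}\mathbf{x}\mathbf{y}^td\gamma(\mathbf{x},\mathbf{y})-\boldsymbol{\pi}_{WV^\perp}\right\|\le\epsilon$ (operator norm induced by the Euclidean norm). For $\epsilon\ge0$, $\mu$ and $\nu$ perform probabilistic $\epsilon$-consistent reconstruction if there is $\gamma\in\Gamma(\mu,\nu)$ such that for every $\mathbf{f}\in\mathbb{R}^n$, $\left(\int_V|\langle\mathbf{f}-\hat{\mathbf{f}},\mathbf{z}\rangle|^2d\nu(\mathbf{z})\right)^{1/2}\le\epsilon\|\mathbf{f}\|$, where $\hat{\mathbf{f}}=\int_{W\times V}\mathbf{x}\langle\mathbf{y},\mathbf{f}\rangle\,d\gamma(\mathbf{x},\mathbf{y})$. *)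

(* Defs.v *)
From HB Require Import structures.
From mathcomp Require Import all_boot all_order all_algebra.
From mathcomp Require Import all_classical all_reals all_analysis.
Set Implicit Arguments. Unset Strict Implicit. Unset Printing Implicit Defensive.
Import Order.TTheory GRing.Theory Num.Theory numFieldNormedType.Exports.
Local Open Scope ring_scope.
Local Open Scope classical_set_scope.

(* Points of R^n are row vectors 'rV[R]_n; [Rn R n] is the same type equipped
   with the Borel sigma-algebra (generated by the open sets of R^n). *)
Definition Rn (R : realType) (n : nat) := g_sigma_algebraType (@open 'rV[R]_n).

Section Defs.
Variables (R : realType) (n : nat).
Local Notation vec := 'rV[R]_n.

Definition dot (x y : vec) : R := (x *m y^T) 0 0.
Definition enorm (x : vec) : R := Num.sqrt (dot x x).

(* Subspaces of R^n are represented by (row spaces of) n x n matrices. *)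
Definition perp (V : 'M[R]_n) : 'M[R]_n := kermx V^T.

(* A matrix A : 'M_n acts on (column) vectors as x |-> A x; on row vectors
   this is x |-> x *m A^T. *)
Definition mxapply (A : 'M[R]_n) (x : vec) : vec := x *m A^T.

Definition opnorm (A : 'M[R]_n) : R :=
  sup [set enorm (mxapply A x) | x in [set x : vec | enorm x <= 1]].

(* Oblique projection onto W along V^perp (as a matrix acting on columns) *)
Definition oblique_proj (W V : 'M[R]_n) : 'M[R]_n := (proj_mx W (perp V))^T.

Definition is_MPinv (A X : 'M[R]_n) : Prop :=
  [/\ A *m X *m A = A, X *m A *m X = X, (A *m X)^T = A *m X & (X *m A)^T = X *m A].
Definition MPinv (A : 'M[R]_n) : 'M[R]_n := xget 0 [set X | is_MPinv A X].

Definition mxint d (T : measurableType d) (m : {measure set T -> \bar R})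
  p q (F : T -> 'M[R]_(p, q)) : 'M[R]_(p, q) :=
  \matrix_(i, j) Rintegral m setT (fun t => F t i j).

Definition M2 (eta : set (Rn R n) -> \bar R) : \bar R :=
  (\int[eta]_x ((enorm x) ^+ 2)%:E)%E.

Definition P2 (S : 'M[R]_n) (eta : probability (Rn R n) R) : Prop :=
  eta [set x : Rn R n | (x <= S)%MS] = 1%E /\ (M2 eta < +oo)%E.

Definition frame_bounds (S : 'M[R]_n) (eta : probability (Rn R n) R) (A B : R) :=
  [/\ P2 S eta, 0 < A, A <= B &
    forall x : vec, (x <= S)%MS ->
      ((A * enorm x ^+ 2)%:E <= \int[eta]_y ((dot x y) ^+ 2)%:E)%E /\
      (\int[eta]_y ((dot x y) ^+ 2)%:E <= (B * enorm x ^+ 2)%:E)%E].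

Definition prob_frame (S : 'M[R]_n) (eta : probability (Rn R n) R) :=
  exists A B, frame_bounds S eta A B.

Definition upper_frame_bound (S : 'M[R]_n) (eta : probability (Rn R n) R) (B : R) :=
  forall x : vec, (x <= S)%MS ->
    (\int[eta]_y ((dot x y) ^+ 2)%:E <= (B * enorm x ^+ 2)%:E)%E.

Definition frame_op (eta : probability (Rn R n) R) : 'M[R]_n :=
  mxint eta (fun y : Rn R n => (y : vec)^T *m (y : vec)).

Definition coupling (mu nu : probability (Rn R n) R)
    (g : probability (Rn R n * Rn R n)%type R) : Prop :=
  (forall A : set (Rn R n), measurable A -> g (fst @^-1` A) = mu A) /\
  (forall A : set (Rn R n), measurable A -> g (snd @^-1` A) = nu A).

Definition cross_op (g : probability (Rn R n * Rn R n)%type R) : 'M[R]_n :=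
  mxint g (fun p : Rn R n * Rn R n => (p.1 : vec)^T *m (p.2 : vec)).

Definition approx_dual (W V : 'M[R]_n) (mu nu : probability (Rn R n) R) (eps : R) :=
  0 <= eps /\
  exists g, coupling mu nu g /\ opnorm (cross_op g - oblique_proj W V) <= eps.

Definition recon (g : probability (Rn R n * Rn R n)%type R) (f : vec) : vec :=
  \row_i Rintegral g setT (fun p : Rn R n * Rn R n => (p.1 : vec) 0 i * dot p.2 f).

(* probabilistic eps-consistent reconstruction; the inequality
   (int |<f - fhat, z>|^2 dnu)^(1/2) <= eps |f| is stated squared (eps >= 0) *)
Definition consistent_recon (mu nu : probability (Rn R n) R) (eps : R) :=
  0 <= eps /\
  exists g, coupling mu nu g /\
    forall f : vec,
      (\int[nu]_z ((dot (f - recon g f) z) ^+ 2)%:E <= ((eps * enorm f) ^+ 2)%:E)%E.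

End Defs.

(* Main.v *)
Require Import Defs.
From HB Require Import structures.
From mathcomp Require Import all_boot all_order all_algebra.
From mathcomp Require Import all_classical all_reals all_analysis.
From mathcomp Require Import ring lra.
From mathcomp Require Import measurable_realfun.
Import Order.TTheory GRing.Theory Num.Theory numFieldNormedType.Exports.
Local Open Scope ring_scope.
Local Open Scope classical_set_scope.
Set Implicit Arguments. Unset Strict Implicit. Unset Printing Implicit Defensive.

Lemma quad_disc (R : realType) (a b c : R) : 0 <= c ->
  (forall t, 0 <= a - 2 * t * b + t ^+ 2 * c) -> b ^+ 2 <= a * c.
Proof.
move=> c0 H; have [cz|cpos] := eqVneq c 0.
  have [bz|bnz] := eqVneq b 0; first by rewrite bz cz expr0n /= mulr0.
  have := H ((a + 1) / (2 * b)); rewrite cz mulr0 addr0.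
  have -> : a - 2 * ((a + 1) / (2 * b)) * b = -1 by field; rewrite bnz.
  by rewrite oppr_ge0 ler10.
have cp : 0 < c by rewrite lt_neqAle eq_sym cpos c0.
have := H (b / c).
have -> : a - 2 * (b / c) * b + (b / c) ^+ 2 * c = a - b ^+ 2 / c.
  by field.
rewrite subr_ge0 ler_pdivrMr //.
Qed.

Section LA.
Variables (R : realType) (n : nat).
Local Notation vec := 'rV[R]_n.

Lemma dotE (x y : vec) : dot x y = \sum_k x 0 k * y 0 k.
Proof. by rewrite /dot mxE; apply: eq_bigr => k _; rewrite mxE. Qed.

Lemma dotC (x y : vec) : dot x y = dot y x.
Proof. by rewrite !dotE; apply: eq_bigr => k _; rewrite mulrC. Qed.

Lemma dotDl (x y z : vec) : dot (x + y) z = dot x z + dot y z.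
Proof. by rewrite !dotE -big_split; apply: eq_bigr => k _; rewrite mxE mulrDl. Qed.

Lemma dotZl (c : R) (x z : vec) : dot (c *: x) z = c * dot x z.
Proof. by rewrite !dotE mulr_sumr; apply: eq_bigr => k _; rewrite mxE mulrA. Qed.

Lemma dotNl (x z : vec) : dot (- x) z = - dot x z.
Proof. by rewrite -scaleN1r dotZl mulN1r. Qed.

Lemma dotBl (x y z : vec) : dot (x - y) z = dot x z - dot y z.
Proof. by rewrite dotDl dotNl. Qed.

Lemma dotDr (x y z : vec) : dot z (x + y) = dot z x + dot z y.
Proof. by rewrite dotC dotDl !(dotC z). Qed.

Lemma dotZr (c : R) (x z : vec) : dot z (c *: x) = c * dot z x.
Proof. by rewrite dotC dotZl dotC. Qed.

Lemma dotBr (x y z : vec) : dot z (x - y) = dot z x - dot z y.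
Proof. by rewrite dotC dotBl !(dotC z). Qed.

Lemma dot0l (z : vec) : dot 0 z = 0.
Proof. by rewrite dotE big1 // => k _; rewrite mxE mul0r. Qed.

Lemma dot0r (z : vec) : dot z 0 = 0.
Proof. by rewrite dotC dot0l. Qed.

Lemma dotMr (x y : vec) (A : 'M[R]_n) : dot x (y *m A) = dot (x *m A^T) y.
Proof. by rewrite /dot trmx_mul mulmxA. Qed.

Lemma dot_ge0 (x : vec) : 0 <= dot x x.
Proof. by rewrite dotE sumr_ge0 // => k _; rewrite -expr2 sqr_ge0. Qed.

Lemma dot_eq0 (x : vec) : dot x x = 0 -> x = 0.
Proof.
rewrite dotE => /eqP; rewrite psumr_eq0 => [/allP H|k _]; last by rewrite -expr2 sqr_ge0.
apply/rowP => k; rewrite mxE; have := H k (mem_index_enum k).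
by rewrite /= -expr2 sqrf_eq0 => /eqP.
Qed.

Lemma enorm2 (x : vec) : enorm x ^+ 2 = dot x x.
Proof. by rewrite /enorm sqr_sqrtr // dot_ge0. Qed.

Lemma enorm_ge0 (x : vec) : 0 <= enorm x.
Proof. exact: sqrtr_ge0. Qed.

Lemma dot_CS (x y : vec) : dot x y ^+ 2 <= dot x x * dot y y.
Proof.
apply: quad_disc; first exact: dot_ge0.
move=> t; have := dot_ge0 (x - t *: y).
rewrite dotBl !dotBr !dotZl !dotZr (dotC y x).
suff -> : dot x x - t * dot x y - (t * dot x y - t * (t * dot y y)) =
  dot x x - 2 * t * dot x y + t ^+ 2 * dot y y by [].
by ring.
Qed.

Lemma enormZ (c : R) (x : vec) : enorm (c *: x) = `|c| * enorm x.
Proof.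
by rewrite /enorm dotZl dotZr mulrA -expr2 sqrtrM ?sqr_ge0 // sqrtr_sqr.
Qed.

Lemma dot_perp (V : 'M[R]_n) (v z : vec) :
  (v <= perp V)%MS -> (z <= V)%MS -> dot v z = 0.
Proof.
move=> /sub_kermxP vV /submxP [w ->].
by rewrite /dot trmx_mul mulmxA vV mul0mx mxE.
Qed.

Lemma capmx_perp (V : 'M[R]_n) : (V :&: perp V)%MS = 0.
Proof.
apply/eqP; rewrite -submx0; apply/rV_subP => v; rewrite sub_capmx => /andP[vV vP].
by rewrite (dot_eq0 (dot_perp vP vV)) sub0mx.
Qed.

Lemma addmx_perp_full (V : 'M[R]_n) (u : vec) : (u <= V + perp V)%MS.
Proof.
apply: submx_full; rewrite /row_full mxrank_disjoint_sum ?capmx_perp //.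
by rewrite /perp mxrank_ker mxrank_tr subnKC // rank_leq_col.
Qed.

Lemma perp_decomp (V : 'M[R]_n) (u : vec) :
  exists u1 u2, [/\ (u1 <= V)%MS, (u2 <= perp V)%MS & u = u1 + u2].
Proof.
exists (u *m proj_mx V (perp V)), (u *m proj_mx (perp V) V); split;
  [exact: proj_mx_sub|exact: proj_mx_sub|].
by rewrite add_proj_mx // ?capmx_perp // addmx_perp_full.
Qed.

Lemma dot_perp_decomp (V : 'M[R]_n) (u1 u2 : vec) :
  (u1 <= V)%MS -> (u2 <= perp V)%MS -> dot u1 u1 <= dot (u1 + u2) (u1 + u2).
Proof.
move=> h1 h2; rewrite dotDl !dotDr (dot_perp h2 h1) dotC (dot_perp h2 h1).
by rewrite !addr0 add0r lerDl dot_ge0.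
Qed.

Definition mxK (B : 'M[R]_n) : R := \sum_j \sum_k B k j ^+ 2.

Lemma mxK_ge0 B : 0 <= mxK B.
Proof. by apply: sumr_ge0 => j _; apply: sumr_ge0 => k _; exact: sqr_ge0. Qed.

Lemma dot_mul_le (x : vec) (B : 'M[R]_n) :
  dot (x *m B) (x *m B) <= dot x x * mxK B.
Proof.
rewrite dotE /mxK mulr_sumr; apply: ler_sum => j _.
pose c : vec := \row_k B k j.
have -> : (x *m B) 0 j * (x *m B) 0 j = dot x c ^+ 2.
  by rewrite expr2 dotE mxE; congr (_ * _); apply: eq_bigr => k _; rewrite mxE.
apply: (le_trans (dot_CS x c)); rewrite ler_wpM2l ?dot_ge0 // dotE.
by rewrite le_eqVlt; apply/orP; left; apply/eqP/eq_bigr => k _; rewrite mxE expr2.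
Qed.

Lemma unit_BBt r (B : 'M[R]_(r, n)) : row_free B -> B *m B^T \in unitmx.
Proof.
move=> fB; rewrite -row_free_unit -kermx_eq0; apply/eqP.
apply/row_matrixP => i; rewrite row0.
have /sub_kermxP : (row i (kermx (B *m B^T)) <= kermx (B *m B^T))%MS by exact: row_sub.
set v := row i _ => hv.
have : (v *m B) *m (v *m B)^T = 0 by rewrite trmx_mul mulmxA -(mulmxA v) hv mul0mx.
move=> h; have : dot (v *m B) (v *m B) = 0 by rewrite /dot h mxE.
move/dot_eq0 => h2; apply: (row_free_inj fB); by rewrite /= h2 mul0mx.
Qed.

Lemma MP_exists_fact r (F : 'M[R]_(n, r)) (G : 'M[R]_(r, n)) :
  row_free G -> row_free F^T -> exists X, is_MPinv (F *m G) X.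
Proof.
move=> fG fF.
pose P := invmx (G *m G^T); pose Q := invmx (F^T *m F).
have uP : G *m G^T \in unitmx by exact: unit_BBt.
have uQ : F^T *m F \in unitmx by have := unit_BBt fF; rewrite trmxK.
exists (G^T *m P *m Q *m F^T).
have hQ : Q *m (F^T *m F) = 1%:M by rewrite mulVmx.
have hP : (G *m G^T) *m P = 1%:M by rewrite mulmxV.
have PT : P^T = P by rewrite /P trmx_inv trmx_mul trmxK.
have QT : Q^T = Q by rewrite /Q trmx_inv trmx_mul trmxK.
have e1 : F *m G *m (G^T *m P *m Q *m F^T) = F *m Q *m F^T.
  by rewrite !mulmxA -(mulmxA F G) -(mulmxA F) hP mulmx1.
have e2 : (G^T *m P *m Q *m F^T) *m (F *m G) = G^T *m P *m G.
  by rewrite !mulmxA -(mulmxA _ F^T F) -(mulmxA _ Q) hQ mulmx1.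
split.
- by rewrite e1 !mulmxA -(mulmxA _ F^T F) -(mulmxA F Q) hQ mulmx1.
- by rewrite e2 !mulmxA -(mulmxA _ G G^T) -(mulmxA (G^T *m P) (G *m G^T) P) hP mulmx1.
- by rewrite e1 !trmx_mul trmxK QT mulmxA.
- by rewrite e2 !trmx_mul trmxK PT mulmxA.
Qed.

Lemma MP_exists (A : 'M[R]_n) : exists X, is_MPinv A X.
Proof.
rewrite -(mulmx_base A); apply: MP_exists_fact; first exact: row_base_free.
by rewrite -row_leq_rank mxrank_tr; move: (col_base_full A); rewrite /row_full => /eqP ->.
Qed.

Lemma MPinvP (A : 'M[R]_n) : is_MPinv A (MPinv A).
Proof. exact: (xgetPex 0 (MP_exists A)). Qed.

End LA.

Section Meas.
Variables (R : realType) (n : nat).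
Local Notation vec := 'rV[R]_n.

Lemma cont_meas (f : vec -> R) : continuous f -> measurable_fun [set: Rn R n] f.
Proof.
move=> /continuousP cf; apply: (measurability _ (measurable_realfun.RGenOpens.measurableE R)).
move=> _ [_ [a [b ->] <-]]; rewrite setTI; apply: sub_sigma_algebra.
exact/cf/interval_open.
Qed.

Lemma coord_meas (i : 'I_n) : measurable_fun [set: Rn R n] (fun x : Rn R n => (x : vec) 0 i).
Proof. apply: cont_meas; exact: (@coord_continuous R 1 n 0 i). Qed.

Lemma mx_norm_entry (x : vec) i : `|x 0 i| <= `|x|.
Proof.
have -> : `|x| = mx_norm x by [].
rewrite mx_normrE; exact: (le_bigmax _ (fun ij : 'I_1 * 'I_n => `|x ij.1 ij.2|) (0, i)).
Qed.

Lemma mx_norm_le (x : vec) (c : R) : 0 <= c -> (forall i, `|x 0 i| <= c) -> `|x| <= c.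
Proof.
move=> c0 H; have -> : `|x| = mx_norm x by [].
rewrite mx_normrE; apply: bigmax_le => // -[i j] _ /=.
by rewrite (ord1 i); exact: H.
Qed.

Lemma mulmx_lip (A : 'M[R]_n) (x : vec) :
  `|x *m A| <= `|x| * \sum_j \sum_k `|A k j|.
Proof.
apply: mx_norm_le; first by rewrite mulr_ge0 // sumr_ge0 // => j _; rewrite sumr_ge0.
move=> i; rewrite mxE (le_trans (ler_norm_sum _ _ _)) //.
apply: (@le_trans _ _ (\sum_k `|x| * `|A k i|)).
  apply: ler_sum => k _; rewrite normrM ler_wpM2r //; exact: mx_norm_entry.
rewrite -mulr_sumr ler_wpM2l //.
by rewrite [leRHS](bigD1 i) //= lerDl sumr_ge0 // => j _; rewrite sumr_ge0.
Qed.

Lemma mulmx_cont (A : 'M[R]_n) : continuous (fun x : vec => x *m A).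
Proof.
move=> x; apply/(@cvgrPdist_lt _ _ _ (nbhs x)) => e e0.
pose c := \sum_j \sum_k `|A k j| + 1.
have c0 : 0 < c by rewrite ltr_wpDl // sumr_ge0 // => j _; rewrite sumr_ge0.
near=> y.
rewrite -mulmxBl (le_lt_trans (mulmx_lip _ _)) //.
apply: (@le_lt_trans _ _ (`|x - y| * c)).
  by rewrite ler_wpM2l // lerDl.
rewrite -ltr_pdivlMr //.
near: y; apply: cvgr_dist_lt => //; exact: divr_gt0.
Unshelve. all: by end_near.
Qed.

Lemma vcont_meas (f : vec -> vec) : continuous f -> measurable_fun [set: Rn R n] (f : Rn R n -> Rn R n).
Proof.
move=> /continuousP cf.
apply: (@measurability _ _ (Rn R n) (Rn R n) setT f (@open vec : set (set (Rn R n)))) => //.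
move=> _ [A oA <-]; rewrite setTI; apply: sub_sigma_algebra.
exact/cf.
Qed.

End Meas.

Section Gen.
Variables (d : measure_display) (T : measurableType d) (R : realType).
Variable (m : {measure set T -> \bar R}).

Definition intg (f : T -> R) := m.-integrable setT (EFin \o f).

Lemma intg_meas (f : T -> R) : intg f -> measurable_fun setT f.
Proof. by move=> /integrableP[/measurable_EFinP]. Qed.

Lemma intgZ (c : R) (f : T -> R) : intg f -> intg (fun t => c * f t).
Proof.
move=> h; have := integrableZl measurableT c h.
by apply: eq_integrable => // t _ /=; rewrite EFinM.
Qed.

Lemma RintZ (c : R) (f : T -> R) : intg f -> \int[m]_t (c * f t) = c * \int[m]_t f t.
Proof. by move=> h; rewrite RintegralZl. Qed.

Lemma intgD (f g : T -> R) : intg f -> intg g -> intg (fun t => f t + g t).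
Proof. by move=> hf hg; have := integrableD measurableT hf hg; apply: eq_integrable. Qed.

Lemma intgB (f g : T -> R) : intg f -> intg g -> intg (fun t => f t - g t).
Proof. 
move=> hf hg; have := integrableB measurableT hf hg; apply: eq_integrable => //.
Qed.

Lemma intg_sum I (s : seq I) (f : I -> T -> R) :
  (forall i, intg (f i)) ->
  intg (fun t => \sum_(i <- s) f i t) /\
  \int[m]_t (\sum_(i <- s) f i t) = \sum_(i <- s) \int[m]_t f i t.
Proof.
move=> hf; elim: s => [|i s [ih1 ih2]].
  under [X in intg X]eq_fun do rewrite big_nil.
  under eq_Rintegral do rewrite big_nil.
  rewrite big_nil; split.
    by apply: (eq_integrable measurableT (cst 0%E)) => //; exact: integrable0.
  by rewrite Rintegral_cst //= mul0r.
under [X in intg X]eq_fun do rewrite big_cons.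
under eq_Rintegral do rewrite big_cons.
rewrite big_cons; split; first exact: intgD.
rewrite RintegralD //; last exact: hf. congr (_ + _). exact: ih2.
Qed.

Lemma intg_le (f g : T -> R) : measurable_fun setT f -> (forall t, `|f t| <= g t) -> intg g -> intg f.
Proof.
move=> mf h hg; apply: (le_integrable measurableT _ _ hg).
  exact/measurable_EFinP.
by move=> t _ /=; rewrite lee_fin (le_trans (h t)) // ler_norm.
Qed.

Lemma intg_fin (f : T -> R) : measurable_fun setT f -> (forall t, 0 <= f t) ->
  (\int[m]_t (f t)%:E < +oo)%E -> intg f.
Proof.
move=> mf f0 hf; apply/integrableP; split; first exact/measurable_EFinP.
under eq_integral => t _ do rewrite /= ger0_norm ?f0 //.
by [].
Qed.

Lemma EFin_Rint (f : T -> R) : intg f -> (\int[m]_t (f t)%:E)%E = (\int[m]_t f t)%:E.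
Proof. by move=> h; rewrite /Rintegral fineK //; exact: integrable_fin_num. Qed.

Lemma ae_int_eq (S : set T) (f g : T -> R) : measurable S -> m (~` S) = 0%E ->
  measurable_fun setT f -> measurable_fun setT g ->
  (forall t, S t -> f t = g t) ->
  (\int[m]_t (f t)%:E = \int[m]_t (g t)%:E)%E.
Proof.
move=> mS mS0 mf mg h; apply: ae_eq_integral => //.
- exact/measurable_EFinP.
- exact/measurable_EFinP.
exists (~` S); split => //; first exact: measurableC.
by move=> t /= H St; apply: H => _; rewrite h.
Qed.

Lemma ae_Rint_eq (S : set T) (f g : T -> R) : measurable S -> m (~` S) = 0%E ->
  measurable_fun setT f -> measurable_fun setT g ->
  (forall t, S t -> f t = g t) ->
  \int[m]_t f t = \int[m]_t g t.
Proof. by move=> mS mS0 mf mg h; rewrite /Rintegral (@ae_int_eq S f g). Qed.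

Lemma Rint_ge0 (f : T -> R) : (forall t, 0 <= f t) -> 0 <= \int[m]_t f t.
Proof. by move=> h; apply: Rintegral_ge0. Qed.

Lemma Rint_CS (f g : T -> R) : intg (fun t => f t ^+ 2) -> intg (fun t => g t ^+ 2) ->
  intg (fun t => f t * g t) ->
  (\int[m]_t (f t * g t)) ^+ 2 <=
    \int[m]_t (f t ^+ 2) * \int[m]_t (g t ^+ 2).
Proof.
move=> hf hg hfg; apply: quad_disc; first by apply: Rint_ge0 => t; exact: sqr_ge0.
move=> s.
have : 0 <= \int[m]_t ((f t - s * g t) ^+ 2) by apply: Rint_ge0 => t; exact: sqr_ge0.
have e : forall t, (f t - s * g t) ^+ 2 = (f t ^+ 2 - (2 * s) * (f t * g t)) + s ^+ 2 * g t ^+ 2.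
  by move=> t; ring.
under eq_Rintegral do rewrite e.
rewrite RintegralD //; last 2 first.
- by apply: intgB => //; exact: intgZ.
- exact: intgZ.
rewrite RintegralB //; last exact: intgZ.
by rewrite !RintZ // mulrA.
Qed.

Variable n : nat.
Local Notation vec := 'rV[R]_n.

Definition L2 (a : T -> vec) :=
  (forall i, measurable_fun setT (fun t => a t 0 i)) /\
  (\int[m]_t (dot (a t) (a t))%:E < +oo)%E.

Lemma meas_dot (a : T -> vec) (v : vec) : (forall i, measurable_fun setT (fun t => a t 0 i)) ->
  measurable_fun setT (fun t => dot v (a t)).
Proof.
move=> ha; have -> : (fun t => dot v (a t)) = (fun t => \sum_k v 0 k * a t 0 k).
  by apply/funext => t; rewrite dotE.
by apply: measurable_sum => k; exact: measurable_funM.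
Qed.

Lemma meas_dot_dot (a b : T -> vec) (v w : vec) : (forall i, measurable_fun setT (fun t => a t 0 i)) ->
  (forall i, measurable_fun setT (fun t => b t 0 i)) ->
  measurable_fun setT (fun t => dot v (a t) * dot w (b t)).
Proof. by move=> ha hb; apply: measurable_funM; exact: meas_dot. Qed.

Lemma meas_dot2 (a b : T -> vec) : (forall i, measurable_fun setT (fun t => a t 0 i)) ->
  (forall i, measurable_fun setT (fun t => b t 0 i)) ->
  measurable_fun setT (fun t => dot (a t) (b t)).
Proof.
move=> ha hb.
have -> : (fun t => dot (a t) (b t)) = (fun t => \sum_k a t 0 k * b t 0 k).
  by apply/funext => t; rewrite dotE.
by apply: measurable_sum => k; exact: measurable_funM.
Qed.

Lemma coord_le_dot (x : vec) i : x 0 i ^+ 2 <= dot x x.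
Proof.
rewrite dotE (bigD1 i) //= -expr2 lerDl sumr_ge0 // => j _; rewrite -expr2 sqr_ge0 //.
Qed.

Lemma L2_prod (a b : T -> vec) i j : L2 a -> L2 b -> intg (fun t => a t 0 i * b t 0 j).
Proof.
move=> [ma fa] [mb fb].
apply: (@intg_le _ (fun t => dot (a t) (a t) + dot (b t) (b t))).
- exact: measurable_funM.
- move=> t; apply: (@le_trans _ _ (a t 0 i ^+ 2 + b t 0 j ^+ 2)).
    rewrite normrM -[a t 0 i ^+ 2]real_normK ?num_real // -[b t 0 j ^+ 2]real_normK ?num_real //.
    have := sqr_ge0 (`|a t 0 i| - `|b t 0 j|); have := normr_ge0 (a t 0 i); have := normr_ge0 (b t 0 j).
    nra.
  by apply: lerD; exact: coord_le_dot.
- by apply: intgD; apply: intg_fin => //; (try exact: meas_dot2); move=> t; exact: dot_ge0.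
Qed.

Lemma L2_dot_dot (a b : T -> vec) (v w : vec) : L2 a -> L2 b ->
  intg (fun t => dot v (a t) * dot w (b t)) /\
  \int[m]_t (dot v (a t) * dot w (b t)) =
    \sum_i \sum_j (v 0 i * w 0 j) * \int[m]_t (a t 0 i * b t 0 j).
Proof.
move=> ha hb.
have e : forall t, dot v (a t) * dot w (b t) =
    \sum_i \sum_j (v 0 i * w 0 j) * (a t 0 i * b t 0 j).
  move=> t; rewrite !dotE mulr_suml; apply: eq_bigr => i _.
  rewrite mulr_sumr; apply: eq_bigr => j _; ring.
under [X in intg X]eq_fun do rewrite e.
under eq_Rintegral do rewrite e.
have hi : forall i, intg (fun t => \sum_j (v 0 i * w 0 j) * (a t 0 i * b t 0 j)).
  by move=> i; apply: (intg_sum _ _ ).1 => j; apply: intgZ; exact: L2_prod.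
have [h1 ->] := intg_sum (index_enum _) hi; split => //.
apply: eq_bigr => i _; have [_ ->] := intg_sum (index_enum _) (fun j => intgZ (v 0 i * w 0 j) (L2_prod i j ha hb)).
by apply: eq_bigr => j _; rewrite RintZ //; exact: L2_prod.
Qed.

Lemma mxint_quad (a b : T -> vec) (v w : vec) : L2 a -> L2 b ->
  (v *m mxint m (fun t => (a t)^T *m b t) *m w^T) 0 0 =
    \int[m]_t (dot v (a t) * dot w (b t)).
Proof.
move=> ha hb; rewrite (L2_dot_dot v w ha hb).2 mxE.
rewrite [RHS]exchange_big /=; apply: eq_bigr => j _.
rewrite !mxE mulr_suml; apply: eq_bigr => i _; rewrite !mxE.
under eq_Rintegral do rewrite !mxE big_ord1 !mxE.
ring.
Qed.

End Gen.

Section Setup.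
Variables (R : realType) (n : nat).
Local Notation vec := 'rV[R]_n.
Local Notation Rn := (Rn R n).

Definition Sset (S : 'M[R]_n) : set Rn := [set x : Rn | ((x : vec) <= S)%MS].

Lemma lin_coord_meas (A : 'M[R]_n) i :
  measurable_fun [set: Rn] (fun x : Rn => ((x : vec) *m A) 0 i).
Proof.
have -> : (fun x : Rn => ((x : vec) *m A) 0 i) = (fun x : Rn => \sum_k (x : vec) 0 k * A k i).
  by apply/funext => x; rewrite mxE.
by apply: measurable_sum => k; apply: measurable_funM => //; exact: coord_meas.
Qed.

Lemma Sset_meas S : measurable (Sset S).
Proof.
pose K := cokermx S.
have -> : Sset S = (fun x : Rn => dot ((x : vec) *m K) ((x : vec) *m K)) @^-1` [set 0].
  apply/seteqP; split => x /=.
    by rewrite /Sset /= submxE => /eqP ->; rewrite dot0l.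
  by move/dot_eq0; rewrite /Sset /= submxE => ->.
rewrite -[X in measurable X]setTI; apply: (meas_dot2 (a := fun x : Rn => (x : vec) *m K)) => //.
- exact: lin_coord_meas.
- exact: lin_coord_meas.
Qed.

Lemma Sset_null (eta : probability Rn R) S : eta (Sset S) = 1%E -> eta (~` Sset S) = 0%E.
Proof. move=> h; rewrite probability_setC; [by rewrite h subee | exact: Sset_meas]. Qed.

Lemma id_coord_meas i : measurable_fun [set: Rn] (fun x : Rn => (x : vec) 0 i).
Proof. exact: coord_meas. Qed.

Lemma L2_of_intg d (T : measurableType d) (m : {measure set T -> \bar R}) (a : T -> vec) :
  (forall i, measurable_fun setT (fun t => a t 0 i)) ->
  intg m (fun t => dot (a t) (a t)) -> L2 m a.
Proof.
move=> ha /integrableP [_ h]; split => //.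
have md : measurable_fun setT (fun t => dot (a t) (a t)) by exact: meas_dot2.
apply: le_lt_trans h; apply: ge0_le_integral => //.
- by move=> t _; rewrite lee_fin dot_ge0.
- exact/measurable_EFinP.
- apply: (@measurableT_comp _ _ _ _ _ _ (@abse R)); first exact: abse_measurable.
  exact/measurable_EFinP.
- by move=> t _; exact: lee_abs.
Qed.

Lemma M2_dot (eta : set Rn -> \bar R) : M2 eta = (\int[eta]_x (dot (x : vec) (x : vec))%:E)%E.
Proof. by rewrite /M2; congr integral; apply/funext => x; rewrite enorm2. Qed.

Lemma L2_id (eta : probability Rn R) : (M2 eta < +oo)%E -> L2 eta (fun x : Rn => (x : vec)).
Proof. by move=> h; split; [exact: id_coord_meas | rewrite -M2_dot]. Qed.

End Setup.

Section Coupling.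
Variables (R : realType) (n : nat).
Local Notation vec := 'rV[R]_n.
Local Notation Rn := (Rn R n).
Variables (mu nu : probability Rn R) (g : probability (Rn * Rn)%type R).
Hypothesis hg : coupling mu nu g.

Lemma coupling_int1 (h : Rn -> R) : measurable_fun setT h -> (forall x, 0 <= h x) ->
  (\int[g]_p (h p.1)%:E = \int[mu]_x (h x)%:E)%E.
Proof.
move=> mh h0.
have := @ge0_integral_pushforward _ _ _ _ R fst measurable_fst g setT (fun x => (h x)%:E) measurableT.
rewrite preimage_setT => <- //.
- apply: eq_measure_integral => A mA _; rewrite /pushforward; exact: hg.1.
- exact/measurable_EFinP.
- by move=> y _; rewrite lee_fin.
Qed.

Lemma coupling_int2 (h : Rn -> R) : measurable_fun setT h -> (forall x, 0 <= h x) ->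
  (\int[g]_p (h p.2)%:E = \int[nu]_x (h x)%:E)%E.
Proof.
move=> mh h0.
have := @ge0_integral_pushforward _ _ _ _ R snd measurable_snd g setT (fun x => (h x)%:E) measurableT.
rewrite preimage_setT => <- //.
- apply: eq_measure_integral => A mA _; rewrite /pushforward; exact: hg.2.
- exact/measurable_EFinP.
- by move=> y _; rewrite lee_fin.
Qed.

Lemma L2_fst : (M2 mu < +oo)%E -> L2 g (fun p : Rn * Rn => (p.1 : vec)).
Proof.
move=> h; split.
  by move=> i; exact: (measurableT_comp (coord_meas i) measurable_fst).
rewrite (coupling_int1 (h := fun x : Rn => dot (x : vec) (x : vec))) -?M2_dot //.
- by apply: (meas_dot2 (a := fun x : Rn => (x : vec))); exact: coord_meas.
- by move=> x; exact: dot_ge0.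
Qed.

Lemma L2_snd : (M2 nu < +oo)%E -> L2 g (fun p : Rn * Rn => (p.2 : vec)).
Proof.
move=> h; split.
  by move=> i; exact: (measurableT_comp (coord_meas i) measurable_snd).
rewrite (coupling_int2 (h := fun x : Rn => dot (x : vec) (x : vec))) -?M2_dot //.
- by apply: (meas_dot2 (a := fun x : Rn => (x : vec))); exact: coord_meas.
- by move=> x; exact: dot_ge0.
Qed.

Lemma coupling_null1 S : mu (Sset S) = 1%E ->
  g (~` (fst @^-1` Sset S)) = 0%E.
Proof.
move=> h; rewrite preimage_setC hg.1; first exact: Sset_null.
by apply: measurableC; exact: Sset_meas.
Qed.

Lemma fst_meas S : measurable (fst @^-1` (Sset S) : set (Rn * Rn)).
Proof. by rewrite -[X in measurable X]setTI; apply: measurable_fst => //; exact: Sset_meas. Qed.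

End Coupling.

Section LA2.
Variables (R : realType) (n : nat).
Local Notation vec := 'rV[R]_n.

Lemma vec_eq_dot (x y : vec) : (forall w, dot x w = dot y w) -> x = y.
Proof.
move=> h; apply/eqP; rewrite -subr_eq0; apply/eqP/dot_eq0.
by rewrite dotBl h subrr.
Qed.

Lemma perp_perp (S : 'M[R]_n) (y : vec) :
  (forall w, (w <= perp S)%MS -> dot y w = 0) -> (y <= S)%MS.
Proof.
move=> h; have [y1 [y2 [h1 h2 ey]]] := perp_decomp S y.
have : dot y y2 = 0 by exact: h.
rewrite ey dotDl (dotC y1) (dot_perp h2 h1) add0r => /dot_eq0 y20.
by rewrite y20 addr0.
Qed.

Lemma dot_delta i (x : vec) : dot (delta_mx 0 i) x = x 0 i.
Proof.
rewrite dotE (bigD1 i) //= mxE !eqxx mul1r big1 ?addr0 // => j ji.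
by rewrite mxE (negbTE ji) andbF mul0r.
Qed.

Lemma enorm_opp (x : vec) : enorm (- x) = enorm x.
Proof. by rewrite /enorm dotNl dotC dotNl opprK. Qed.

Lemma opnorm_le (A : 'M[R]_n) (f : vec) : enorm (mxapply A f) <= opnorm A * enorm f.
Proof.
pose E := [set enorm (mxapply A x) | x in [set x : vec | enorm x <= 1]].
have hub : has_ubound E.
  exists (Num.sqrt (mxK A^T)) => _ [x /= hx <-].
  rewrite /enorm ler_sqrt ?mxK_ge0 //; apply: (le_trans (dot_mul_le _ _)).
  rewrite -[leRHS]mul1r ler_wpM2r ?mxK_ge0 // -enorm2 -(expr1n _ 2).
  by rewrite lerXn2r ?nnegrE ?enorm_ge0.
have [->|fn0] := eqVneq f 0.
  by rewrite /mxapply mul0mx /enorm dot0l sqrtr0 mulr0.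
have cp : 0 < enorm f.
  rewrite lt_neqAle enorm_ge0 andbT eq_sym; apply/negP => /eqP h.
  by move: fn0; have := enorm2 f; rewrite h expr0n /= => /esym /dot_eq0 ->; rewrite eqxx.
have : enorm (mxapply A ((enorm f)^-1 *: f)) <= opnorm A.
  apply: ub_le_sup => //; exists ((enorm f)^-1 *: f) => //=.
  by rewrite enormZ ger0_norm ?invr_ge0 ?enorm_ge0 // mulVf // gt_eqF.
rewrite /mxapply -scalemxAl enormZ ger0_norm ?invr_ge0 ?enorm_ge0 //.
by rewrite mulrC -ler_pdivlMr ?invr_gt0 // invrK.
Qed.

End LA2.

Section Main.
Variables (R : realType) (n : nat).
Local Notation vec := 'rV[R]_n.
Local Notation Rn := (Rn R n).
Variables (W V : 'M[R]_n) (mu nu : probability Rn R).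
Hypothesis hfull : (W + perp V == 1%:M)%MS.
Hypothesis hdir : mxdirect (W + perp V).
Hypothesis muW : mu (Sset W) = 1%E.
Hypothesis mu2 : (M2 mu < +oo)%E.
Hypothesis nuV : nu (Sset V) = 1%E.
Hypothesis nu2 : (M2 nu < +oo)%E.

Local Notation Pm := (proj_mx W (perp V)).

Lemma capWP : (W :&: perp V)%MS = 0.
Proof. exact/mxdirect_addsP. Qed.

Lemma inWP (x : vec) : (x <= W + perp V)%MS.
Proof. by rewrite (eqmxP hfull) submx1. Qed.

Lemma obl_apply (x : vec) : mxapply (oblique_proj W V) x = x *m Pm.
Proof. by rewrite /mxapply /oblique_proj trmxK. Qed.

Lemma Pm_perp (x : vec) : (x - x *m Pm <= perp V)%MS.
Proof.
have e := add_proj_mx capWP (inWP x).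
have -> : x - x *m Pm = x *m proj_mx (perp V) W.
  by rewrite -{1}e addrC addKr.
exact: proj_mx_sub.
Qed.

Lemma nuVnull : nu (~` Sset V) = 0%E.
Proof. exact: Sset_null. Qed.

Lemma L2nu : L2 nu (fun x : Rn => (x : vec)).
Proof. exact: L2_id. Qed.

Local Notation Sm := (frame_op nu).

Lemma Sm_quad (v w : vec) : (v *m Sm *m w^T) 0 0 =
  \int[nu]_z (dot v (z : vec) * dot w (z : vec)).
Proof. exact: (mxint_quad v w L2nu L2nu). Qed.

Lemma Sm_ae0 (v w : vec) : (w <= perp V)%MS -> (v *m Sm *m w^T) 0 0 = 0.
Proof.
move=> hw; rewrite Sm_quad.
rewrite (@ae_Rint_eq _ _ _ nu (Sset V) _ (fun _ => 0)) //.
- by rewrite Rintegral_cst // mul0r.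
- exact: Sset_meas.
- exact: nuVnull.
- by apply: meas_dot_dot; exact: coord_meas.
- by move=> z zV; rewrite (dot_perp hw zV) mulr0.
Qed.

Lemma Sm_V (v : vec) : (v *m Sm <= V)%MS.
Proof.
apply: perp_perp => w hw; rewrite /dot.
by have := Sm_ae0 v hw.
Qed.

Lemma Sm_comm (v w : vec) : (v *m Sm *m w^T) 0 0 = (w *m Sm *m v^T) 0 0.
Proof. by rewrite !Sm_quad; apply: eq_Rintegral => z _; rewrite mulrC. Qed.

Lemma Sm_perp (v : vec) : (v <= perp V)%MS -> v *m Sm = 0.
Proof.
move=> hv; apply: vec_eq_dot => w; rewrite dot0l /dot Sm_comm.
exact: Sm_ae0.
Qed.

Lemma Sm_sym : Sm^T = Sm.
Proof.
apply/matrixP => i j; rewrite !mxE; apply: eq_Rintegral => z _.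
by rewrite !mxE !big_ord1 !mxE mulrC.
Qed.

Lemma meas_sq (v : vec) : measurable_fun [set: Rn] (fun z : Rn => dot v (z : vec) ^+ 2).
Proof.
have -> : (fun z : Rn => dot v (z : vec) ^+ 2) = (fun z : Rn => dot v (z : vec) * dot v (z : vec)).
  by apply/funext => z; rewrite expr2.
by apply: meas_dot_dot; exact: coord_meas.
Qed.

Lemma intg_sq (v w : vec) : intg nu (fun z : Rn => dot v (z : vec) * dot w (z : vec)).
Proof. exact: (L2_dot_dot v w L2nu L2nu).1. Qed.

Lemma intg_sq2 (v : vec) : intg nu (fun z : Rn => dot v (z : vec) ^+ 2).
Proof.
have := intg_sq v v; apply: eq_integrable => // z _ /=; by rewrite expr2.
Qed.

Lemma int_sq_Sm (v : vec) : (\int[nu]_z ((dot v (z : vec)) ^+ 2)%:E)%E = ((v *m Sm *m v^T) 0 0)%:E.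
Proof.
rewrite EFin_Rint; last exact: intg_sq2.
by rewrite Sm_quad; congr EFin; apply: eq_Rintegral => z _; rewrite expr2.
Qed.

Hypothesis nulow : exists A : R, 0 < A /\ forall x : vec, (x <= V)%MS ->
  ((A * enorm x ^+ 2)%:E <= \int[nu]_y ((dot x (y : vec)) ^+ 2)%:E)%E.

Lemma Sm_inj (v : vec) : (v <= V)%MS -> v *m Sm = 0 -> v = 0.
Proof.
move=> hv hS; have [A [A0 hA]] := nulow.
have := hA v hv; rewrite int_sq_Sm hS !mul0mx mxE lee_fin enorm2.
rewrite pmulr_rle0 // => h; apply: dot_eq0; apply/eqP; rewrite eq_le h dot_ge0.
done.
Qed.

Lemma subB_sub (x y : vec) (S : 'M[R]_n) : (x <= S)%MS -> (y <= S)%MS -> (x - y <= S)%MS.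
Proof. by move=> hx hy; apply: addmx_sub => //; rewrite eqmx_opp. Qed.

Lemma key (u : vec) : (u <= W)%MS -> u *m Sm *m (MPinv Sm)^T *m Pm = u.
Proof.
move=> hu; have [mp1 _ _ mp4] := MPinvP Sm.
set X := MPinv Sm.
have [u1 [u2 [h1 h2 eu]]] := perp_decomp V u.
have u2S : u2 *m Sm = 0 by exact: Sm_perp.
have SXT : Sm *m X^T = X *m Sm by rewrite -mp4 trmx_mul Sm_sym.
have SXTS : Sm *m X^T *m Sm = Sm.
  by have := congr1 trmx mp1; rewrite !trmx_mul !Sm_sym mulmxA.
have d0 : u1 *m Sm *m X^T = u1.
  apply/eqP; rewrite -subr_eq0; apply/eqP; apply: Sm_inj.
    apply: subB_sub => //; rewrite -mulmxA SXT mulmxA; exact: Sm_V.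
  by rewrite mulmxBl -!mulmxA (mulmxA Sm) SXTS subrr.
have uP : u *m Pm = u by rewrite proj_mx_id // capWP.
have u2P : u2 *m Pm = 0 by rewrite proj_mx_0 // capWP.
have u1P : u1 *m Pm = u.
  by rewrite -[in RHS]uP eu mulmxDl u2P addr0.
by rewrite {1}eu mulmxDl u2S addr0 d0.
Qed.

Lemma recon_eq g (hg : coupling mu nu g) (f : vec) : recon g f = f *m (cross_op g)^T.
Proof.
apply/rowP => i; rewrite mxE.
transitivity (\int[g]_p (dot (delta_mx 0 i) (p.1 : vec) * dot f (p.2 : vec))).
  by apply: eq_Rintegral => p _; rewrite dot_delta dotC.
rewrite -(mxint_quad (delta_mx 0 i) f (L2_fst hg mu2) (L2_snd hg nu2)) -/(cross_op g).
rewrite -rowE !mxE; apply: eq_bigr => j _; rewrite !mxE mulrC.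
done.
Qed.

Lemma CT_W g (hg : coupling mu nu g) (x : vec) : (x *m (cross_op g)^T <= W)%MS.
Proof.
apply: perp_perp => w hw.
rewrite dotC dotMr trmxK /dot.
rewrite (mxint_quad w x (L2_fst hg mu2) (L2_snd hg nu2)).
have hS : measurable (fst @^-1` Sset W : set (Rn * Rn)) := fst_meas W.
have hN := coupling_null1 hg muW.
have mf : measurable_fun setT (fun p : Rn * Rn => dot w (p.1 : vec) * dot x (p.2 : vec)).
  apply: meas_dot_dot => i.
    exact: (measurableT_comp (coord_meas i) measurable_fst).
  exact: (measurableT_comp (coord_meas i) measurable_snd).
rewrite (ae_Rint_eq hS hN mf (measurable_cst (0:R))); first by rewrite Rintegral_cst // mul0r.
by move=> p pW; rewrite (dot_perp hw pW) mul0r.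
Qed.

Lemma recon_diff g (hg : coupling mu nu g) (f : vec) (z : vec) : (z <= V)%MS ->
  dot (f - recon g f) z = dot (f *m (Pm - (cross_op g)^T)) z.
Proof.
move=> zV; rewrite recon_eq //.
have -> : f - f *m (cross_op g)^T = (f - f *m Pm) + f *m (Pm - (cross_op g)^T).
  by rewrite mulmxBr addrA subrK.
by rewrite dotDl (dot_perp (Pm_perp f) zV) add0r.
Qed.

Lemma meas_recon g (f : vec) : measurable_fun [set: Rn]
  (fun z : Rn => dot (f - recon g f) (z : vec) ^+ 2).
Proof.
have -> : (fun z : Rn => dot (f - recon g f) (z : vec) ^+ 2) =
  (fun z : Rn => dot (f - recon g f) (z : vec) * dot (f - recon g f) (z : vec)).
  by apply/funext => z; rewrite expr2.
by apply: meas_dot_dot; exact: coord_meas.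
Qed.

Lemma apply_CP g (f : vec) :
  mxapply (cross_op g - oblique_proj W V) f = - (f *m (Pm - (cross_op g)^T)).
Proof.
by rewrite /mxapply /oblique_proj linearB /= trmxK !mulmxBr opprB.
Qed.

Lemma part1 eps B : 0 < B -> upper_frame_bound V nu B ->
  approx_dual W V mu nu eps -> consistent_recon mu nu (Num.sqrt B * eps).
Proof.
move=> B0 hB [e0 [g [hg hop]]]; split; first by rewrite mulr_ge0 ?sqrtr_ge0.
exists g; split => // f.
set u := f *m (Pm - (cross_op g)^T).
have [u1 [u2 [h1 h2 eu]]] := perp_decomp V u.
rewrite (@ae_int_eq _ _ _ nu (Sset V) _ (fun z : Rn => dot u1 (z : vec) ^+ 2)).
- apply: le_trans (hB u1 h1) _; rewrite lee_fin.
  have hu : enorm u <= eps * enorm f.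
    rewrite -enorm_opp -apply_CP (le_trans (opnorm_le _ _)) //.
    by rewrite ler_wpM2r ?enorm_ge0.
  have hu1 : enorm u1 ^+ 2 <= (eps * enorm f) ^+ 2.
    rewrite enorm2 (le_trans (dot_perp_decomp h1 h2)) // -eu -enorm2.
    by rewrite lerXn2r ?nnegrE ?enorm_ge0 ?mulr_ge0 ?enorm_ge0.
  rewrite -mulrA exprMn (sqr_sqrtr (ltW B0)).
  by apply: ler_wpM2l => //; exact: (ltW B0).
- exact: Sset_meas.
- exact: nuVnull.
- exact: meas_recon.
- exact: meas_sq.
- move=> z zV; rewrite recon_diff // -/u eu dotDl.
  by rewrite (dot_perp h2 zV) addr0.
Qed.
Lemma part2 alpha : consistent_recon mu nu alpha ->
  approx_dual W V mu nu
       (alpha * Num.sqrt (fine (M2 (pushforward nu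
          (mxapply (oblique_proj W V *m MPinv Sm) : Rn -> Rn))))).
Proof.
move=> [a0 [g [hg hc]]].
set X := MPinv Sm.
set M' := X^T *m Pm.
have eM : forall z, mxapply (oblique_proj W V *m X) z = z *m M'.
  by move=> z; rewrite /mxapply /oblique_proj trmx_mul trmxK.
have intgM : intg nu (fun z : Rn => dot ((z : vec) *m M') ((z : vec) *m M')).
  apply: (@intg_le _ _ _ _ _ (fun z : Rn => mxK M' * dot (z : vec) (z : vec))).
  - by apply: (meas_dot2 (a := fun z : Rn => (z : vec) *m M')); exact: lin_coord_meas.
  - by move=> z; rewrite ger0_norm ?dot_ge0 // mulrC; exact: dot_mul_le.
  - apply: intgZ; apply: intg_fin => //.
    + by apply: (meas_dot2 (a := fun z : Rn => (z : vec))); exact: coord_meas.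
    + by move=> z; exact: dot_ge0.
    + by rewrite -M2_dot.
set Mp := \int[nu]_z dot ((z : vec) *m M') ((z : vec) *m M').
have eMp : fine (M2 (pushforward nu (mxapply (oblique_proj W V *m X) : Rn -> Rn))) = Mp.
  rewrite M2_dot ge0_integral_pushforward //.
  - rewrite preimage_setT.
    under eq_integral do rewrite /= eM.
    by rewrite EFin_Rint.
  - apply: vcont_meas; exact: mulmx_cont.
  - apply/measurable_EFinP.
    by apply: (meas_dot2 (a := fun z : Rn => (z : vec))); exact: coord_meas.
  - by move=> y _; rewrite lee_fin dot_ge0.
have Mp0 : 0 <= Mp by apply: Rint_ge0 => z; exact: dot_ge0.
split; first by rewrite mulr_ge0 ?sqrtr_ge0.
exists g; split => //.
rewrite eMp; apply: ge_sup.
  exists (enorm (mxapply (cross_op g - oblique_proj W V) 0)), 0 => //=.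
  by rewrite /enorm dot0l sqrtr0 ler01.
move=> _ [x hx <-].
rewrite apply_CP enorm_opp.
set u := x *m (Pm - (cross_op g)^T).
have hu : (u <= W)%MS.
  by rewrite /u mulmxBr; apply: subB_sub; [exact: proj_mx_sub | exact: CT_W].
have e1 : dot u u = \int[nu]_z (dot u (z : vec) * dot (u *m M'^T) (z : vec)).
  rewrite -Sm_quad.
  have -> : u *m Sm *m (u *m M'^T)^T = (u *m Sm *m X^T *m Pm) *m u^T.
    by rewrite trmx_mul trmxK /M' !mulmxA.
  by rewrite key.
have b1 : \int[nu]_z (dot u (z : vec) ^+ 2) <= (alpha * enorm x) ^+ 2.
  have := hc x.
  rewrite (@ae_int_eq _ _ _ nu (Sset V) _ (fun z : Rn => dot u (z : vec) ^+ 2)).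
  - by rewrite EFin_Rint ?lee_fin //; exact: intg_sq2.
  - exact: Sset_meas.
  - exact: nuVnull.
  - exact: meas_recon.
  - exact: meas_sq.
  - by move=> z zV; rewrite recon_diff.
have b2 : \int[nu]_z (dot (u *m M'^T) (z : vec) ^+ 2) <= dot u u * Mp.
  rewrite /Mp -RintZ //; apply: le_Rintegral => //.
  - exact: intg_sq2.
  - exact: intgZ.
  - by move=> z _; rewrite -dotMr; exact: dot_CS.
have main : dot u u ^+ 2 <= (alpha * enorm x) ^+ 2 * (dot u u * Mp).
  rewrite {1}e1; apply: le_trans (Rint_CS (intg_sq2 _) (intg_sq2 _) (intg_sq _ _)) _.
  apply: ler_pM => //; apply: Rint_ge0 => z; exact: sqr_ge0.
have hd : dot u u <= (alpha * enorm x) ^+ 2 * Mp.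
  have [->|nz] := eqVneq (dot u u) 0; first by rewrite mulr_ge0 ?sqr_ge0.
  have pos : 0 < dot u u by rewrite lt_neqAle eq_sym nz dot_ge0.
  by move: main; rewrite expr2 mulrCA ler_pM2l.
apply: (@le_trans _ _ (alpha * enorm x * Num.sqrt Mp)).
  rewrite /enorm -[X in _ <= X * _]ger0_norm ?mulr_ge0 ?enorm_ge0 //.
  by rewrite -sqrtr_sqr -sqrtrM ?sqr_ge0 // ler_sqrt // mulr_ge0 ?sqr_ge0.
rewrite mulrAC ler_piMr //; by rewrite mulr_ge0 ?sqrtr_ge0.
Qed.
End Main.

Unset Implicit Arguments.

Theorem proposition6p3 (R : realType) (n : nat) (W V : 'M[R]_n)
    (mu nu : probability (Rn R n) R) :
  (W + perp V == 1%:M)%MS -> mxdirect (W + perp V) ->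
  prob_frame W mu -> prob_frame V nu ->
  (forall eps B : R, 0 < B -> upper_frame_bound V nu B ->
     approx_dual W V mu nu eps -> consistent_recon mu nu (Num.sqrt B * eps)) /\
  (forall alpha : R, consistent_recon mu nu alpha ->
     approx_dual W V mu nu
       (alpha * Num.sqrt (fine (M2 (pushforward nu
          (mxapply (oblique_proj W V *m MPinv (frame_op nu)) : Rn R n -> Rn R n)))))).
Proof.
move=> hfull hdir [Am [Bm [[muW mu2] _ _ _]]] [An [Bn [[nuV nu2] An0 _ hn]]].
split.
- move=> eps B B0 hB hd; exact: (part1 hfull hdir mu2 nuV nu2 B0 hB hd).
- move=> alpha hc; apply: (part2 hfull hdir muW mu2 nuV nu2 _ hc).
  by exists An; split => // x hx; exact: (hn x hx).1.
Qed.
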